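(* Let $\mathbf{C}=\mathbf{R}^+\times\mathrm{SO}(2)$ (nonzero complex numbers $re^{i\theta}$ identified with $(r,R(\theta))$), with distance $d\big((r_1,R_1),(r_2,R_2)\big)=\sqrt{\log^2(r_1^{-1}r_2)+\|\operatorname{logm}(R_1^{-1}R_2)\|_F^2}$, and let $G=(\mathbf{R}\setminus\{0\})\times\mathrm{SO}(2)$ act on $\mathbf{C}$ by $(r_g,R_g).(r,R)=(r_g^2r,R_gR)$. For points $\mathbf{z}_1,\dots,\mathbf{z}_K\in\mathbf{C}$ and weights $w_1,\dots,w_K\in(0,1]$ with $\sum_i w_i=1$, define the weighted Fréchet mean $$\mathrm{wFM}(\{\mathbf{z}_i\},\{w_i\})=\operatorname{argmin}_{\mathbf{m}\in\mathbf{C}}\sum_{i=1}^K w_i\, d^2(\mathbf{z}_i,\mathbf{m}).$$ Then $\mathrm{wFM}$ is equivariant to the action of $G$: for every $g\in G$, $\mathrm{wFM}(\{g.\mathbf{z}_i\},\{w_i\})=g.\,\mathrm{wFM}(\{\mathbf{z}_i\},\{w_i\})$, i.e. $\mathbf{m}$ is a minimizer for $\{\mathbf{z}_i\}$ if and only if $g.\mathbf{m}$ is a minimizer for $\{g.\mathbf{z}_i\}$.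
   Context: $R(\theta)=\begin{bmatrix}\cos\theta & -\sin\theta\\ \sin\theta & \cos\theta\end{bmatrix}$, $\theta\in[-\pi,\pi]$; for $A=R(\theta)$, $\operatorname{logm}(A)=\theta\begin{bmatrix}0&1\\-1&0\end{bmatrix}$; $\|\cdot\|_F$ is the Frobenius norm. *)

(* Defs.v *)
From HB Require Import structures.
From mathcomp Require Import all_boot all_order all_algebra.
From mathcomp Require Import all_classical all_reals all_analysis.
Set Implicit Arguments. Unset Strict Implicit. Unset Printing Implicit Defensive.
Import Order.TTheory GRing.Theory Num.Theory.
Local Open Scope ring_scope.
Local Open Scope classical_set_scope.

Section Defs.
Variable R : realType.

Definition rot (t : R) : 'M[R]_2 :=
  \matrix_(i < 2, j < 2)
    if i == 0 :> nat then (if j == 0 :> nat then cos t else - sin t)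
    else (if j == 0 :> nat then sin t else cos t).

Definition SO2 : set 'M[R]_2 := [set A | A^T *m A = 1%:M /\ \det A = 1].

Definition Jmx : 'M[R]_2 :=
  \matrix_(i < 2, j < 2)
    if i == 0 :> nat then (if j == 0 :> nat then 0 else 1)
    else (if j == 0 :> nat then -1 else 0).

(* angle theta in [-pi,pi] with A = R(theta) (chosen; unique up to +-pi) *)
Definition rot_angle (A : 'M[R]_2) : R :=
  xget 0 [set t : R | -pi <= t <= pi /\ rot t = A].

Definition logm (A : 'M[R]_2) : 'M[R]_2 := rot_angle A *: Jmx.

Definition frob (A : 'M[R]_2) : R :=
  Num.sqrt (\sum_(i < 2) \sum_(j < 2) (A i j) ^+ 2).

Definition Cpt (z : R * 'M[R]_2) : Prop := 0 < z.1 /\ SO2 z.2.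

Definition dist (z1 z2 : R * 'M[R]_2) : R :=
  Num.sqrt ((ln (z1.1^-1 * z2.1)) ^+ 2 + (frob (logm (invmx z1.2 *m z2.2))) ^+ 2).

Definition Gpt (g : R * 'M[R]_2) : Prop := g.1 != 0 /\ SO2 g.2.

Definition act (g z : R * 'M[R]_2) : R * 'M[R]_2 := (g.1 ^+ 2 * z.1, g.2 *m z.2).

Definition is_wFM (K : nat) (z : 'I_K -> R * 'M[R]_2) (w : 'I_K -> R)
  (m : R * 'M[R]_2) : Prop :=
  Cpt m /\ forall m', Cpt m' ->
    \sum_(i < K) w i * dist (z i) m ^+ 2 <= \sum_(i < K) w i * dist (z i) m' ^+ 2.

End Defs.

(* Main.v *)
Require Import Defs.
From HB Require Import structures.
From mathcomp Require Import all_boot all_order all_algebra.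
From mathcomp Require Import all_classical all_reals all_analysis.
Import Order.TTheory GRing.Theory Num.Theory.
Local Open Scope ring_scope.

Lemma SO2_unit (R : realType) (A : 'M[R]_2) : SO2 A -> A \in unitmx.
Proof. by case=> _ hd; rewrite unitmxE hd unitr1. Qed.

Lemma SO2M (R : realType) (A B : 'M[R]_2) : SO2 A -> SO2 B -> SO2 (A *m B).
Proof.
case=> hA dA [hB dB]; split; last by rewrite det_mulmx dA dB mulr1.
by rewrite trmx_mul mulmxA -(mulmxA B^T) hA mulmx1 hB.
Qed.

Lemma SO2tr (R : realType) (A : 'M[R]_2) : SO2 A -> SO2 A^T.
Proof.
case=> hA dA; split; last by rewrite det_tr.
by rewrite trmxK; apply: mulmx1C.
Qed.

Lemma dist_act (R : realType) (g z m : R * 'M[R]_2) :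
  Gpt g -> Cpt z -> dist (act g z) (act g m) = dist z m.
Proof.
case=> g1 g2 [_ z2]; rewrite /dist /act /=.
have -> : (g.1 ^+ 2 * z.1)^-1 * (g.1 ^+ 2 * m.1) = z.1^-1 * m.1.
  by rewrite invfM -mulrA mulrCA mulKf // expf_neq0.
have -> : invmx (g.2 *m z.2) *m (g.2 *m m.2) = invmx z.2 *m m.2.
  have -> : g.2 *m m.2 = (g.2 *m z.2) *m (invmx z.2 *m m.2).
    by rewrite -mulmxA (mulmxA z.2) mulmxV ?mul1mx //; apply: SO2_unit.
  rewrite mulKmx //; apply: SO2_unit; exact: SO2M.
by [].
Qed.

Theorem proposition3 (R : realType) (K : nat) (z : 'I_K -> R * 'M[R]_2)
  (w : 'I_K -> R) :
  (forall i, Cpt (z i)) ->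
  (forall i, 0 < w i <= 1) ->
  \sum_(i < K) w i = 1 ->
  forall g : R * 'M[R]_2, Gpt g ->
  forall m : R * 'M[R]_2,
    is_wFM z w m <-> is_wFM (fun i => act g (z i)) w (act g m).
Proof.
move=> hz _ _ g hg m.
have g1 : 0 < g.1 ^+ 2 by rewrite exprn_even_gt0 //; case: hg.
have hS : forall m', (\sum_(i < K) w i * dist (act g (z i)) (act g m') ^+ 2)
   = \sum_(i < K) w i * dist (z i) m' ^+ 2.
  by move=> m'; apply: eq_bigr => i _; rewrite dist_act.
have CA : forall m', Cpt m' -> Cpt (act g m').
  move=> m' [h1 h2]; split; first by rewrite /= mulr_gt0.
  by apply: SO2M => //; case: hg.
split.
- case=> hm H; split; first exact: CA.
  move=> m' hm'.
  pose m'' := (m'.1 / g.1 ^+ 2, g.2^T *m m'.2).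
  have e : act g m'' = m'.
    rewrite /act /m'' /=; case: hg => _ [hg2 _].
    rewrite mulrC -mulrA mulVf ?mulr1 ?gt_eqF // mulmxA.
    by rewrite (mulmx1C hg2) mul1mx -surjective_pairing.
  rewrite -e !hS; apply: H; case: hm' => h1 h2; split.
    by rewrite /= divr_gt0.
  by apply: SO2M => //; apply: SO2tr; case: hg.
- case=> hm H; split.
    case: hm => h1 h2; split.
      by move: h1; rewrite /= pmulr_rgt0.
    case: hg => _ hg2.
    have -> : m.2 = g.2^T *m (g.2 *m m.2).
      by rewrite mulmxA; case: hg2 => -> _; rewrite mul1mx.
    by apply: SO2M => //; apply: SO2tr.
  move=> m' hm'; rewrite -!hS; exact: H (CA _ hm').
Qed.
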